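(* Let $\lambda_1,\lambda_2,\lambda_3,\lambda_4>0$ and $\alpha>0$. For a decomposition $\bm{X}=\sum_{d=1}^{D/P}\bm{W}\times_1\bm{H}_{:d:}\times_2\bm{R}_{:d:}\times_3\bm{T}_{:d:}$ define $$A=\sum_{d=1}^{D/P}\Big[\lambda_1\big(\|\bm{H}_{:d:}\|_F^{\alpha}+\|\bm{R}_{:d:}\|_F^{\alpha}+\|\bm{T}_{:d:}\|_F^{\alpha}\big)+\lambda_4\big(\|\bm{W}\times_2\bm{R}_{:d:}\times_3\bm{T}_{:d:}\|_F^{\alpha}+\|\bm{W}\times_3\bm{T}_{:d:}\times_1\bm{H}_{:d:}\|_F^{\alpha}+\|\bm{W}\times_1\bm{H}_{:d:}\times_2\bm{R}_{:d:}\|_F^{\alpha}\big)\Big],$$ $$B=\sum_{d=1}^{D/P}\Big[\lambda_2\big(\|\bm{T}_{:d:}\|_F^{\alpha}\|\bm{R}_{:d:}\|_F^{\alpha}+\|\bm{T}_{:d:}\|_F^{\alpha}\|\bm{H}_{:d:}\|_F^{\alpha}+\|\bm{R}_{:d:}\|_F^{\alpha}\|\bm{H}_{:d:}\|_F^{\alpha}\big)+\lambda_3\big(\|\bm{W}\times_1\bm{H}_{:d:}\|_F^{\alpha}+\|\bm{W}\times_2\bm{R}_{:d:}\|_F^{\alpha}+\|\bm{W}\times_3\bm{T}_{:d:}\|_F^{\alpha}\big)\Big].$$ Then: (i) for any tensor $\bm{X}\in\mathbb{R}^{n_1\times n_2\times n_3}$ there exists a decomposition of $\bm{X}$ of this form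 for which $A<\frac{\sqrt{\lambda_1\lambda_4}}{\sqrt{\lambda_2\lambda_3}}B$; and (ii) for some tensor $\bm{X}$ there exists a decomposition of $\bm{X}$ of this form for which $A>\frac{\sqrt{\lambda_1\lambda_4}}{\sqrt{\lambda_2\lambda_3}}B$.
   Context: A decomposition of $\bm{X}\in\mathbb{R}^{n_1\times n_2\times n_3}$ consists of positive integers $P,D$ with $P\mid D$, a core $\bm{W}\in\mathbb{R}^{P\times P\times P}$, and arrays $\bm{H}\in\mathbb{R}^{n_1\times (D/P)\times P}$, $\bm{R}\in\mathbb{R}^{n_2\times (D/P)\times P}$, $\bm{T}\in\mathbb{R}^{n_3\times (D/P)\times P}$ with $\bm{X}=\sum_{d=1}^{D/P}\bm{W}\times_1\bm{H}_{:d:}\times_2\bm{R}_{:d:}\times_3\bm{T}_{:d:}$, where $\bm{H}_{:d:}\in\mathbb{R}^{n_1\times P}$ is the slice with middle index $d$ and $(\bm{W}\times_1\bm{A})_{imn}=\sum_l\bm{W}_{lmn}\bm{A}_{il}$ (with $\times_2,\times_3$ analogous). $\|\cdot\|_F$ is the Frobenius norm. *)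

(* Defs.v *)
From mathcomp Require Import all_boot all_order all_algebra.
From mathcomp Require Import all_classical all_reals all_analysis.
Set Implicit Arguments. Unset Strict Implicit. Unset Printing Implicit Defensive.
Import Order.TTheory GRing.Theory Num.Theory.
Local Open Scope ring_scope.

Section Tensors.
Variable R : realType.

Definition tensor3 (a b c : nat) := 'I_a -> 'I_b -> 'I_c -> R.
Definition mat (n p : nat) := 'I_n -> 'I_p -> R.

Definition fro3 a b c (X : tensor3 a b c) : R :=
  Num.sqrt (\sum_(i < a) \sum_(j < b) \sum_(k < c) X i j k ^+ 2).
Definition fro2 n p (M : mat n p) : R :=
  Num.sqrt (\sum_(i < n) \sum_(j < p) M i j ^+ 2).

Definition mode1 a b c n (W : tensor3 a b c) (A : mat n a) : tensor3 n b c :=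
  fun i m k => \sum_(l < a) W l m k * A i l.
Definition mode2 a b c n (W : tensor3 a b c) (A : mat n b) : tensor3 a n c :=
  fun l i k => \sum_(m < b) W l m k * A i m.
Definition mode3 a b c n (W : tensor3 a b c) (A : mat n c) : tensor3 a b n :=
  fun l m i => \sum_(k < c) W l m k * A i k.

Definition slice n K P (H : tensor3 n K P) (d : 'I_K) : mat n P :=
  fun i p => H i d p.

Definition is_decomp n1 n2 n3 (X : tensor3 n1 n2 n3) (P D : nat)
  (W : tensor3 P P P) (H : tensor3 n1 (D %/ P) P)
  (Rr : tensor3 n2 (D %/ P) P) (T : tensor3 n3 (D %/ P) P) : Prop :=
  [/\ (0 < P)%N, (0 < D)%N, (P %| D)%N &
    forall i j k, X i j k = \sum_(d < D %/ P)
      mode3 (mode2 (mode1 W (slice H d)) (slice Rr d)) (slice T d) i j k].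

Definition objA (l1 l4 al : R) n1 n2 n3 P K (W : tensor3 P P P)
  (H : tensor3 n1 K P) (Rr : tensor3 n2 K P) (T : tensor3 n3 K P) : R :=
  \sum_(d < K)
    (l1 * (fro2 (slice H d) `^ al + fro2 (slice Rr d) `^ al
           + fro2 (slice T d) `^ al)
     + l4 * (fro3 (mode3 (mode2 W (slice Rr d)) (slice T d)) `^ al
           + fro3 (mode1 (mode3 W (slice T d)) (slice H d)) `^ al
           + fro3 (mode2 (mode1 W (slice H d)) (slice Rr d)) `^ al)).

Definition objB (l2 l3 al : R) n1 n2 n3 P K (W : tensor3 P P P)
  (H : tensor3 n1 K P) (Rr : tensor3 n2 K P) (T : tensor3 n3 K P) : R :=
  \sum_(d < K)
    (l2 * (fro2 (slice T d) `^ al * fro2 (slice Rr d) `^ al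
           + fro2 (slice T d) `^ al * fro2 (slice H d) `^ al
           + fro2 (slice Rr d) `^ al * fro2 (slice H d) `^ al)
     + l3 * (fro3 (mode1 W (slice H d)) `^ al
           + fro3 (mode2 W (slice Rr d)) `^ al
           + fro3 (mode3 W (slice T d)) `^ al)).

End Tensors.

(* Main.v *)
Require Import Defs.
From mathcomp Require Import all_boot all_order all_algebra.
From mathcomp Require Import all_classical all_reals all_analysis.
Import Order.TTheory GRing.Theory Num.Theory.
Local Open Scope ring_scope.

From mathcomp Require Import zify ring lra.
Set Implicit Arguments. Unset Strict Implicit. Unset Printing Implicit Defensive.

Definition scl3 (R : realType) a b c (k : R) (Y : tensor3 R a b c) : tensor3 R a b c :=
  fun i j l => k * Y i j l.
Definition scl2 (R : realType) n p (k : R) (M : mat R n p) : mat R n p :=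
  fun i j => k * M i j.

Lemma mode1_scl3 (R : realType) a b c n (k : R) (W : tensor3 R a b c) (A : mat R n a) :
  mode1 (scl3 k W) A = scl3 k (mode1 W A).
Proof. apply: funext => i; apply: funext => m; apply: funext => l.
by rewrite /mode1 /scl3 mulr_sumr; apply: eq_bigr => x _; rewrite mulrA. Qed.
Lemma mode2_scl3 (R : realType) a b c n (k : R) (W : tensor3 R a b c) (A : mat R n b) :
  mode2 (scl3 k W) A = scl3 k (mode2 W A).
Proof. apply: funext => i; apply: funext => m; apply: funext => l.
by rewrite /mode2 /scl3 mulr_sumr; apply: eq_bigr => x _; rewrite mulrA. Qed.
Lemma mode3_scl3 (R : realType) a b c n (k : R) (W : tensor3 R a b c) (A : mat R n c) :
  mode3 (scl3 k W) A = scl3 k (mode3 W A).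
Proof. apply: funext => i; apply: funext => m; apply: funext => l.
by rewrite /mode3 /scl3 mulr_sumr; apply: eq_bigr => x _; rewrite mulrA. Qed.
Lemma mode1_scl2 (R : realType) a b c n (k : R) (W : tensor3 R a b c) (A : mat R n a) :
  mode1 W (scl2 k A) = scl3 k (mode1 W A).
Proof. apply: funext => i; apply: funext => m; apply: funext => l.
by rewrite /mode1 /scl3 /scl2 mulr_sumr; apply: eq_bigr => x _; rewrite mulrCA. Qed.
Lemma mode2_scl2 (R : realType) a b c n (k : R) (W : tensor3 R a b c) (A : mat R n b) :
  mode2 W (scl2 k A) = scl3 k (mode2 W A).
Proof. apply: funext => i; apply: funext => m; apply: funext => l.
by rewrite /mode2 /scl3 /scl2 mulr_sumr; apply: eq_bigr => x _; rewrite mulrCA. Qed.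
Lemma mode3_scl2 (R : realType) a b c n (k : R) (W : tensor3 R a b c) (A : mat R n c) :
  mode3 W (scl2 k A) = scl3 k (mode3 W A).
Proof. apply: funext => i; apply: funext => m; apply: funext => l.
by rewrite /mode3 /scl3 /scl2 mulr_sumr; apply: eq_bigr => x _; rewrite mulrCA. Qed.
Lemma scl3_scl3 (R : realType) a b c (k k' : R) (Y : tensor3 R a b c) :
  scl3 k (scl3 k' Y) = scl3 (k * k') Y.
Proof. by apply: funext => i; apply: funext => m; apply: funext => l; rewrite /scl3 mulrA. Qed.

Lemma fro3_scl3 (R : realType) a b c (k : R) (Y : tensor3 R a b c) : 0 <= k ->
  fro3 (scl3 k Y) = k * fro3 Y.
Proof.
move=> k0; rewrite /fro3 /scl3.
have -> : \sum_(i < a) \sum_(j < b) \sum_(l < c) (k * Y i j l) ^+ 2 =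
   k ^+ 2 * \sum_(i < a) \sum_(j < b) \sum_(l < c) Y i j l ^+ 2.
  rewrite mulr_sumr; apply: eq_bigr => i _; rewrite mulr_sumr; apply: eq_bigr => j _.
  by rewrite mulr_sumr; apply: eq_bigr => l _; rewrite exprMn.
by rewrite sqrtrM ?sqr_ge0 // sqrtr_sqr ger0_norm.
Qed.
Lemma fro2_scl2 (R : realType) n p (k : R) (M : mat R n p) : 0 <= k ->
  fro2 (scl2 k M) = k * fro2 M.
Proof.
move=> k0; rewrite /fro2 /scl2.
have -> : \sum_(i < n) \sum_(j < p) (k * M i j) ^+ 2 =
   k ^+ 2 * \sum_(i < n) \sum_(j < p) M i j ^+ 2.
  rewrite mulr_sumr; apply: eq_bigr => i _; rewrite mulr_sumr; apply: eq_bigr => j _.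
  by rewrite exprMn.
by rewrite sqrtrM ?sqr_ge0 // sqrtr_sqr ger0_norm.
Qed.

Definition delta (R : realType) n N : mat R n N := fun i p => (val i == val p)%:R.

Lemma collapse (R : realType) n N (h : (n <= N)%N) (f : 'I_N -> R) (i : 'I_n) :
  \sum_(l < N) f l * @delta R n N i l = f (widen_ord h i).
Proof.
rewrite (bigD1 (widen_ord h i)) //= /delta eqxx mulr1 big1 ?addr0 // => l hl.
suff -> : (val i == val l) = false by rewrite mulr0.
apply/negbTE; apply: contra hl => /eqP e; apply/eqP/val_inj => /=; by rewrite e.
Qed.

Lemma fro2_delta (R : realType) n N (h : (n <= N)%N) : (0 < n)%N ->
  0 < fro2 (@delta R n N).
Proof.
move=> n0; rewrite /fro2.
have -> : \sum_(i < n) \sum_(j < N) @delta R n N i j ^+ 2 = n%:R.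
  transitivity (\sum_(i < n) (1 : R)); last by rewrite sumr_const card_ord.
  apply: eq_bigr => i _; under eq_bigr do rewrite expr2.
  by rewrite (collapse h (fun l => @delta R n N i l)) /delta eqxx.
by rewrite sqrtr_gt0 ltr0n.
Qed.

Definition ext (R : realType) n1 n2 n3 (X : tensor3 R n1 n2 n3) N : tensor3 R N N N :=
  fun l m k => match (insub (val l) : option 'I_n1), (insub (val m) : option 'I_n2),
                     (insub (val k) : option 'I_n3) with
               | Some i, Some j, Some c => X i j c | _, _, _ => 0 end.

Lemma base_decomp (R : realType) n1 n2 n3 (X : tensor3 R n1 n2 n3) N
  (h1 : (n1 <= N)%N) (h2 : (n2 <= N)%N) (h3 : (n3 <= N)%N) i j k :
  mode3 (mode2 (mode1 (@ext R n1 n2 n3 X N) (@delta R n1 N)) (@delta R n2 N)) (@delta R n3 N) i j k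
  = X i j k.
Proof.
have e1 : mode1 (@ext R n1 n2 n3 X N) (@delta R n1 N) = fun i m c => @ext R n1 n2 n3 X N (widen_ord h1 i) m c.
  apply: funext => i'; apply: funext => m; apply: funext => c.
  by rewrite /mode1 (collapse h1 (fun l => @ext R n1 n2 n3 X N l m c)).
rewrite e1.
have e2 : mode2 (fun i m c => @ext R n1 n2 n3 X N (widen_ord h1 i) m c) (@delta R n2 N) =
   fun i j c => @ext R n1 n2 n3 X N (widen_ord h1 i) (widen_ord h2 j) c.
  apply: funext => i'; apply: funext => m; apply: funext => c.
  by rewrite /mode2 (collapse h2 (fun l => @ext R n1 n2 n3 X N (widen_ord h1 i') l c)).
rewrite e2 /mode3 (collapse h3 (fun l => @ext R n1 n2 n3 X N (widen_ord h1 i) (widen_ord h2 j) l)).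
rewrite /ext.
have -> : (insub (nat_of_ord (widen_ord h1 i)) : option 'I_n1) = Some i := valK i.
have -> : (insub (nat_of_ord (widen_ord h2 j)) : option 'I_n2) = Some j := valK j.
by have -> : (insub (nat_of_ord (widen_ord h3 k)) : option 'I_n3) = Some k := valK k.
Qed.

Lemma powR_shrink (R : realType) (al k y : R) : 0 < al -> 0 <= k <= 1 -> 0 <= y ->
  (k * y) `^ al <= y `^ al.
Proof.
move=> a0 /andP[k0 k1] y0; apply: ge0_ler_powR; rewrite ?nnegrE ?mulr_ge0 //.
  exact: ltW.
have := ler_wpM2r y0 k1; by rewrite mul1r.
Qed.

Lemma sum_const1 (R : realType) N (F : 'I_(N %/ N) -> R) c : (0 < N)%N ->
  (forall d, F d = c) -> \sum_(d < N %/ N) F d = c.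
Proof.
move=> N0 hF; rewrite (eq_bigr (fun _ => c)) ?sumr_const ?card_ord ?divnn ?N0 //.
Qed.

Lemma ex_u (R : realType) (a b : R) : 0 <= a -> 0 < b -> exists u : R, 1 <= u /\ u * b = a + b.
Proof.
move=> a0 b0; exists (a / b + 1); split.
  by rewrite lerDr; apply: divr_ge0 => //; exact: ltW.
by rewrite mulrDl divfK ?mul1r // gt_eqF.
Qed.

Lemma ex_t (R : realType) (al u : R) : 0 < al -> 1 <= u -> exists t : R, 1 <= t /\ t `^ al = u.
Proof.
move=> al0 u1; exists (u `^ al^-1); split.
  by rewrite -(powRr0 u) ler_powR // invr_ge0 ltW.
by rewrite -powRrM mulVf ?gt_eqF // powRr1 // (le_trans _ u1).
Qed.

Lemma arith (R : realType) (c l2 a1 a2 e u SA SB : R) : 0 < c -> 0 < l2 -> 0 < e ->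
  0 <= a1 -> 0 <= a2 -> 1 <= u -> u * (c * l2 * e) = a1 + a2 + c * l2 * e ->
  SA <= u * a1 + a2 -> l2 * (u * u * e) <= SB -> SA < c * SB.
Proof.
move=> c0 l20 e0 a10 a20 u1 hu hA hB.
apply: (le_lt_trans hA).
apply: (lt_le_trans _ (ler_wpM2l (ltW c0) hB)).
have -> : c * (l2 * (u * u * e)) = u * (a1 + a2) + u * (c * l2 * e).
  by rewrite -mulrDr -hu; ring.
have : a2 <= u * a2 by have := ler_wpM2r a20 u1; rewrite mul1r.
have : 0 < u * (c * l2 * e).
  by apply: mulr_gt0; [exact: lt_le_trans u1 | do 2 apply: mulr_gt0 => //].
move=> *; lra.
Qed.

Lemma Abound (R : realType) (l1 l4 u P1 P2 P3 Y1 Y2 Y3 Y1' Y2' Y3' : R) :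
  0 < l1 -> 0 < l4 -> Y1' <= Y1 -> Y2' <= Y2 -> Y3' <= Y3 ->
  l1 * (u * P1 + u * P2 + u * P3) + l4 * (Y1' + Y2' + Y3')
  <= u * (l1 * (P1 + P2 + P3)) + l4 * (Y1 + Y2 + Y3).
Proof.
move=> l10 l40 h1 h2 h3.
have -> : l1 * (u * P1 + u * P2 + u * P3) = u * (l1 * (P1 + P2 + P3)) by ring.
rewrite lerD2l; apply: ler_wpM2l; first exact: ltW.
by apply: lerD => //; apply: lerD.
Qed.

Lemma Bbound (R : realType) (l2 l3 u P1 P2 P3 Z1 Z2 Z3 : R) :
  0 < l2 -> 0 < l3 -> 0 <= u -> 0 <= P1 -> 0 <= P2 -> 0 <= P3 ->
  0 <= Z1 -> 0 <= Z2 -> 0 <= Z3 ->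
  l2 * (u * u * (P3 * P2)) <=
  l2 * (u * P3 * (u * P2) + u * P3 * (u * P1) + u * P2 * (u * P1)) + l3 * (Z1 + Z2 + Z3).
Proof.
move=> l20 l30 u0 q1 q2 q3 z1 z2 z3.
have k1 : 0 <= u * P3 * (u * P1) by rewrite !mulr_ge0.
have k2 : 0 <= u * P2 * (u * P1) by rewrite !mulr_ge0.
have k3 : 0 <= l2 * (u * P3 * (u * P1) + u * P2 * (u * P1)).
  by apply: mulr_ge0; [exact: ltW | exact: addr_ge0].
have k4 : 0 <= l3 * (Z1 + Z2 + Z3).
  by apply: mulr_ge0; [exact: ltW | apply: addr_ge0 => //; exact: addr_ge0].
have -> : l2 * (u * u * (P3 * P2)) = l2 * (u * P3 * (u * P2)) by ring.
lra.
Qed.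

Lemma part1 (R : realType) (l1 l2 l3 l4 al : R) :
  0 < l1 -> 0 < l2 -> 0 < l3 -> 0 < l4 -> 0 < al ->
  (forall (n1 n2 n3 : nat), (0 < n1)%N -> (0 < n2)%N -> (0 < n3)%N ->
   forall X : tensor3 R n1 n2 n3,
   exists (P D : nat) (W : tensor3 R P P P) (H : tensor3 R n1 (D %/ P) P)
          (Rr : tensor3 R n2 (D %/ P) P) (T : tensor3 R n3 (D %/ P) P),
     is_decomp X W H Rr T /\
     objA l1 l4 al W H Rr T
       < Num.sqrt (l1 * l4) / Num.sqrt (l2 * l3) * objB l2 l3 al W H Rr T).
Proof.
move=> l10 l20 l30 l40 al0 n1 n2 n3 p1 p2 p3 X.
pose N := (n1 + n2 + n3)%N.
have h1 : (n1 <= N)%N by rewrite /N; lia.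
have h2 : (n2 <= N)%N by rewrite /N; lia.
have h3 : (n3 <= N)%N by rewrite /N; lia.
have N0 : (0 < N)%N by rewrite /N; lia.
pose E := @ext R n1 n2 n3 X N.
pose d1 := @delta R n1 N. pose d2 := @delta R n2 N. pose d3 := @delta R n3 N.
have hH := @fro2_delta R _ N h1 p1. have hR := @fro2_delta R _ N h2 p2.
have hT := @fro2_delta R _ N h3 p3.
pose y1 := fro3 (mode3 (mode2 E d2) d3).
pose y2 := fro3 (mode1 (mode3 E d3) d1).
pose y3 := fro3 (mode2 (mode1 E d1) d2).
pose a1 := l1 * (fro2 d1 `^ al + fro2 d2 `^ al + fro2 d3 `^ al).
pose a2 := l4 * (y1 `^ al + y2 `^ al + y3 `^ al).
pose c := Num.sqrt (l1 * l4) / Num.sqrt (l2 * l3).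
have c0 : 0 < c by rewrite /c divr_gt0 // sqrtr_gt0 mulr_gt0.
pose e := fro2 d3 `^ al * fro2 d2 `^ al.
have e0 : 0 < e by rewrite /e mulr_gt0 // powR_gt0.
have a10 : 0 <= a1.
  by apply: mulr_ge0; [exact: ltW| apply: addr_ge0; [apply: addr_ge0|]; exact: powR_ge0].
have a20 : 0 <= a2.
  by apply: mulr_ge0; [exact: ltW| apply: addr_ge0; [apply: addr_ge0|]; exact: powR_ge0].
have cle0 : 0 < c * l2 * e by do 2 apply: mulr_gt0 => //.
have [u [u1 hu]] := ex_u (addr_ge0 a10 a20) cle0.
have [t [t1 tu]] := ex_t al0 u1.
have t0 : 0 < t by apply: lt_le_trans t1.
have t0' := ltW t0.
have ti0' : 0 <= t^-1 by rewrite invr_ge0.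
have ti0 : 0 <= t^-1 <= 1 by rewrite ti0' /= invf_le1.
have tn0 : t != 0 by rewrite gt_eqF.
pose s := (t ^+ 3)^-1.
exists N, N, (scl3 s E), (fun i (_ : 'I_(N %/ N)) p => scl2 t d1 i p),
  (fun i (_ : 'I_(N %/ N)) p => scl2 t d2 i p), (fun i (_ : 'I_(N %/ N)) p => scl2 t d3 i p).
split.
  split => //.
  move=> i j k; rewrite (@sum_const1 R N _ (X i j k)) // => d.
  change (mode3 (mode2 (mode1 (scl3 s E) (scl2 t d1)) (scl2 t d2)) (scl2 t d3) i j k = X i j k).
  rewrite mode1_scl3 mode1_scl2 !mode2_scl3 !mode2_scl2 !mode3_scl3 !mode3_scl2 !scl3_scl3.
  rewrite /scl3 base_decomp // /s.
  by rewrite [X in X * _ = _](_ : _ = 1) ?mul1r //; field.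
have m1 : mode3 (mode2 (scl3 s E) (scl2 t d2)) (scl2 t d3) = scl3 t^-1 (mode3 (mode2 E d2) d3).
  rewrite mode2_scl3 mode2_scl2 mode3_scl3 mode3_scl3 mode3_scl2 !scl3_scl3 /s.
  by congr scl3; field.
have m2 : mode1 (mode3 (scl3 s E) (scl2 t d3)) (scl2 t d1) = scl3 t^-1 (mode1 (mode3 E d3) d1).
  rewrite mode3_scl3 mode3_scl2 mode1_scl3 mode1_scl3 mode1_scl2 !scl3_scl3 /s.
  by congr scl3; field.
have m3 : mode2 (mode1 (scl3 s E) (scl2 t d1)) (scl2 t d2) = scl3 t^-1 (mode2 (mode1 E d1) d2).
  rewrite mode1_scl3 mode1_scl2 mode2_scl3 mode2_scl3 mode2_scl2 !scl3_scl3 /s.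
  by congr scl3; field.
have fge n p (x : mat R n p) : 0 <= fro2 x by rewrite /fro2 sqrtr_ge0.
have f3ge n1' n2' n3' (x : tensor3 R n1' n2' n3') : 0 <= fro3 x by rewrite /fro3 sqrtr_ge0.
have pw n p (x : mat R n p) : fro2 (scl2 t x) `^ al = u * fro2 x `^ al.
  by rewrite (fro2_scl2 _ t0') (powRM _ t0' (fge _ _ x)) tu.
pose SA := l1 * (fro2 (scl2 t d1) `^ al + fro2 (scl2 t d2) `^ al + fro2 (scl2 t d3) `^ al)
  + l4 * (fro3 (mode3 (mode2 (scl3 s E) (scl2 t d2)) (scl2 t d3)) `^ al
       + fro3 (mode1 (mode3 (scl3 s E) (scl2 t d3)) (scl2 t d1)) `^ al
       + fro3 (mode2 (mode1 (scl3 s E) (scl2 t d1)) (scl2 t d2)) `^ al).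
have eA : objA l1 l4 al (scl3 s E) (fun i (_ : 'I_(N %/ N)) p => scl2 t d1 i p)
  (fun i (_ : 'I_(N %/ N)) p => scl2 t d2 i p)
  (fun i (_ : 'I_(N %/ N)) p => scl2 t d3 i p) = SA.
  by rewrite /objA; apply: (@sum_const1 R N _ SA).
pose SB := l2 * (fro2 (scl2 t d3) `^ al * fro2 (scl2 t d2) `^ al
           + fro2 (scl2 t d3) `^ al * fro2 (scl2 t d1) `^ al
           + fro2 (scl2 t d2) `^ al * fro2 (scl2 t d1) `^ al)
     + l3 * (fro3 (mode1 (scl3 s E) (scl2 t d1)) `^ al
           + fro3 (mode2 (scl3 s E) (scl2 t d2)) `^ al
           + fro3 (mode3 (scl3 s E) (scl2 t d3)) `^ al).
have eB : objB l2 l3 al (scl3 s E) (fun i (_ : 'I_(N %/ N)) p => scl2 t d1 i p)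
  (fun i (_ : 'I_(N %/ N)) p => scl2 t d2 i p)
  (fun i (_ : 'I_(N %/ N)) p => scl2 t d3 i p) = SB.
  by rewrite /objB; apply: (@sum_const1 R N _ SB).
rewrite eA eB.
apply: (arith c0 l20 e0 a10 a20 u1 hu).
  rewrite /SA m1 m2 m3 !pw !(fro3_scl3 _ ti0').
  apply: Abound => //; apply: powR_shrink => //.
rewrite /SB !pw.
apply: Bbound => //; try exact: powR_ge0.
exact: le_trans u1.
Qed.

Lemma part2 (R : realType) (l1 l2 l3 l4 al : R) :
  0 < l1 -> 0 < l2 -> 0 < l3 -> 0 < l4 -> 0 < al ->
  (exists (n1 n2 n3 : nat), [/\ (0 < n1)%N, (0 < n2)%N & (0 < n3)%N] /\
   exists X : tensor3 R n1 n2 n3,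
   exists (P D : nat) (W : tensor3 R P P P) (H : tensor3 R n1 (D %/ P) P)
          (Rr : tensor3 R n2 (D %/ P) P) (T : tensor3 R n3 (D %/ P) P),
     is_decomp X W H Rr T /\
     objA l1 l4 al W H Rr T
       > Num.sqrt (l1 * l4) / Num.sqrt (l2 * l3) * objB l2 l3 al W H Rr T).
Proof.
move=> l10 l20 l30 l40 al0.
exists 1%N, 1%N, 1%N; split; first by [].
pose Z3 : tensor3 R 1 1 1 := fun _ _ _ => 0.
pose Z2 : mat R 1 1 := fun _ _ => 0.
pose O2 : mat R 1 1 := fun _ _ => 1.
exists Z3, 1%N, 1%N, Z3, (fun i (_ : 'I_(1 %/ 1)) p => O2 i p),
  (fun i (_ : 'I_(1 %/ 1)) p => Z2 i p), (fun i (_ : 'I_(1 %/ 1)) p => Z2 i p).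
have z1 n (A : mat R n 1) : mode1 Z3 A = fun _ _ _ => 0.
  by apply: funext => i; apply: funext => m; apply: funext => l; rewrite /mode1 big1 // => *; rewrite mul0r.
have z2 a c (W : tensor3 R a 1 c) : mode2 W Z2 = fun _ _ _ => 0.
  by apply: funext => i; apply: funext => m; apply: funext => l; rewrite /mode2 big1 // => *; rewrite mulr0.
have z3 a b (W : tensor3 R a b 1) : mode3 W Z2 = fun _ _ _ => 0.
  by apply: funext => i; apply: funext => m; apply: funext => l; rewrite /mode3 big1 // => *; rewrite mulr0.
have w2 n (A : mat R n 1) : mode2 Z3 A = fun _ _ _ => 0.
  by apply: funext => i; apply: funext => m; apply: funext => l; rewrite /mode2 big1 // => *; rewrite mul0r.
have w3 n (A : mat R n 1) : mode3 Z3 A = fun _ _ _ => 0.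
  by apply: funext => i; apply: funext => m; apply: funext => l; rewrite /mode3 big1 // => *; rewrite mul0r.
have f30 a b c : fro3 (fun (_ : 'I_a) (_ : 'I_b) (_ : 'I_c) => (0:R)) = 0.
  rewrite /fro3 big1 ?sqrtr0 // => i _; rewrite big1 // => j _; rewrite big1 // => k _.
  by rewrite expr0n.
have f20 : fro2 Z2 = 0.
  by rewrite /fro2 big1 ?sqrtr0 // => i _; rewrite big1 // => j _; rewrite expr0n.
have f21 : fro2 O2 = 1.
  by rewrite /fro2 !big_ord1 expr1n sqrtr1.
have p0 : (0 : R) `^ al = 0 by rewrite powR0 // gt_eqF.
split.
  split => // i j k; rewrite big_ord1.
  change (0 = mode3 (mode2 (mode1 Z3 O2) Z2) Z2 i j k).
  by rewrite z3.
rewrite /objA /objB !big_ord1.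
change (Num.sqrt (l1 * l4) / Num.sqrt (l2 * l3) *
  (l2 * (fro2 Z2 `^ al * fro2 Z2 `^ al + fro2 Z2 `^ al * fro2 O2 `^ al + fro2 Z2 `^ al * fro2 O2 `^ al)
   + l3 * (fro3 (mode1 Z3 O2) `^ al + fro3 (mode2 Z3 Z2) `^ al + fro3 (mode3 Z3 Z2) `^ al))
  < l1 * (fro2 O2 `^ al + fro2 Z2 `^ al + fro2 Z2 `^ al)
   + l4 * (fro3 (mode3 (mode2 Z3 Z2) Z2) `^ al + fro3 (mode1 (mode3 Z3 Z2) O2) `^ al
           + fro3 (mode2 (mode1 Z3 O2) Z2) `^ al)).
rewrite ?z1 ?w2 ?w3 ?z3 ?z2 ?z1 ?w3 ?z3 ?z2 !f30 f20 f21 p0.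
rewrite !mul0r !addr0 !mulr0 !addr0.
by rewrite mulr0; apply: mulr_gt0 => //; apply: powR_gt0.
Qed.

Unset Implicit Arguments.
Set Strict Implicit.
Theorem proposition4 (R : realType) (l1 l2 l3 l4 al : R) :
  0 < l1 -> 0 < l2 -> 0 < l3 -> 0 < l4 -> 0 < al ->
  (forall (n1 n2 n3 : nat), (0 < n1)%N -> (0 < n2)%N -> (0 < n3)%N ->
   forall X : tensor3 R n1 n2 n3,
   exists (P D : nat) (W : tensor3 R P P P) (H : tensor3 R n1 (D %/ P) P)
          (Rr : tensor3 R n2 (D %/ P) P) (T : tensor3 R n3 (D %/ P) P),
     is_decomp X W H Rr T /\
     objA l1 l4 al W H Rr T
       < Num.sqrt (l1 * l4) / Num.sqrt (l2 * l3) * objB l2 l3 al W H Rr T)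
  /\
  (exists (n1 n2 n3 : nat), [/\ (0 < n1)%N, (0 < n2)%N & (0 < n3)%N] /\
   exists X : tensor3 R n1 n2 n3,
   exists (P D : nat) (W : tensor3 R P P P) (H : tensor3 R n1 (D %/ P) P)
          (Rr : tensor3 R n2 (D %/ P) P) (T : tensor3 R n3 (D %/ P) P),
     is_decomp X W H Rr T /\
     objA l1 l4 al W H Rr T
       > Num.sqrt (l1 * l4) / Num.sqrt (l2 * l3) * objB l2 l3 al W H Rr T).
Proof.
move=> l10 l20 l30 l40 al0; split.
  exact: part1.
exact: part2.
Qed.
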